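(* Let $(\mathcal{A},\mathcal{E})$ be a finite, essentially small exact category. Then: (GR4) for all $X,Y\in\mathrm{ind}\mathcal{A}$, $\mu_\mathcal{E}(X)\lll\mu_\mathcal{E}(Y)$ or $\mu_\mathcal{E}(Y)\lll\mu_\mathcal{E}(X)$; (GR5) for every $n\in\mathbb{N}$ the set $\{\mu_\mathcal{E}(X) : X\in\mathrm{ind}\mathcal{A},\ l_\mathcal{E}(X)\le n\}$ is finite; (GR6) $X\in\mathrm{ind}\mathcal{A}$ is $\mathcal{E}$-simple if and only if $\mu_\mathcal{E}(X)\lll\mu_\mathcal{E}(Y)$ for all $Y\in\mathrm{ind}\mathcal{A}$.
   Context: $(\mathcal{A},\mathcal{E})$ is a Quillen exact category; admissible monics are morphisms $i$ with $(i,d)\in\mathcal{E}$ for some $d$. $X\subsetneq_\mathcal{E}Y$ means there is an admissible monic $X\to Y$ that is not an isomorphism. A nonzero object $S$ is $\mathcal{E}$-simple if every object $A$ admitting an admissible monic $A\to S$ is zero or isomorphic to $S$. The $\mathcal{E}$-length $l_\mathcal{E}(X)$ is the supremum of all $n$ such that there is a chain $0=X_0\to\cdots\to X_n=X$ of admissible monics none of which is an isomorphism; $(\mathcal{A},\mathcal{E})$ is finite if $l_\mathcal{E}(X)<\infty$ for all $X$. $\mathrm{ind}\mathcal{A}$ is the set of isomorphism classes of indecomposable objects. $\mathfrak{S}(\mathbb{N})$ is the set of finite nonempty sequences of natural numbers, totally ordered by: $x\lll y$ iff $x=y$, or $x$ is a proper prefix of $y$, or at the first index $i$ where $x_i\neq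 y_i$ (both defined) one has $x_i>y_i$. For indecomposable $X$, $\mu_\mathcal{E}(X)$ is the $\lll$-maximum of $(l_\mathcal{E}(X_1),\dots,l_\mathcal{E}(X_n))$ over all chains $X_1\subsetneq_\mathcal{E}\cdots\subsetneq_\mathcal{E}X_n=X$ ($n\ge1$) with all $X_i$ indecomposable. *)

(* Defs.v *)
From HB Require Import structures.
From mathcomp Require Import all_boot all_algebra.
From Stdlib Require Import ClassicalEpsilon.
Set Implicit Arguments. Unset Strict Implicit. Unset Printing Implicit Defensive.
Import GRing.Theory.
Local Open Scope ring_scope.

Record preadd := PreAdd {
  Obj : Type;
  Hom : Obj -> Obj -> zmodType;
  comp : forall {X Y Z : Obj}, Hom Y Z -> Hom X Y -> Hom X Z;
  idm : forall X : Obj, Hom X X;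
  compA : forall X Y Z W (h : Hom Z W) (g : Hom Y Z) (f : Hom X Y),
      comp h (comp g f) = comp (comp h g) f;
  comp1m : forall X Y (f : Hom X Y), comp (idm Y) f = f;
  compm1 : forall X Y (f : Hom X Y), comp f (idm X) = f;
  compDl : forall X Y Z (g1 g2 : Hom Y Z) (f : Hom X Y),
      comp (g1 + g2) f = comp g1 f + comp g2 f;
  compDr : forall X Y Z (g : Hom Y Z) (f1 f2 : Hom X Y),
      comp g (f1 + f2) = comp g f1 + comp g f2
}.
Arguments comp {p X Y Z}.
Arguments idm {p}.

Section ExactCategories.
Variable C : preadd.
Local Notation Obj := (@Obj C).
Local Notation Hom := (@Hom C).

(** zero object (in a preadditive category: id_X = 0) *)
Definition is_zero (X : Obj) : Prop := idm X = 0.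

Definition iso {X Y : Obj} (f : Hom X Y) : Prop :=
  exists g : Hom Y X, comp g f = idm X /\ comp f g = idm Y.

Definition isomorphic (X Y : Obj) : Prop := exists f : Hom X Y, iso f.

Definition biprod (W A B : Obj) (i1 : Hom A W) (i2 : Hom B W)
  (p1 : Hom W A) (p2 : Hom W B) : Prop :=
  [/\ comp p1 i1 = idm A, comp p2 i2 = idm B, comp p1 i2 = 0,
      comp p2 i1 = 0 & comp i1 p1 + comp i2 p2 = idm W].

Definition additive : Prop :=
  (exists Z : Obj, is_zero Z) /\
  (forall A B : Obj, exists W (i1 : Hom A W) (i2 : Hom B W) (p1 : Hom W A)
     (p2 : Hom W B), biprod i1 i2 p1 p2).

Definition is_kernel {X Y Z : Obj} (i : Hom X Y) (d : Hom Y Z) : Prop :=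
  comp d i = 0 /\
  forall T (f : Hom T Y), comp d f = 0 -> exists! g : Hom T X, comp i g = f.

Definition is_cokernel {X Y Z : Obj} (i : Hom X Y) (d : Hom Y Z) : Prop :=
  comp d i = 0 /\
  forall T (f : Hom Y T), comp f i = 0 -> exists! g : Hom Z T, comp g d = f.

Definition exclass : Type := forall X Y Z : Obj, Hom X Y -> Hom Y Z -> Prop.

Variable E : exclass.

Definition adm_monic {X Y : Obj} (i : Hom X Y) : Prop :=
  exists Z (d : Hom Y Z), E i d.
Definition adm_epic {Y Z : Obj} (d : Hom Y Z) : Prop :=
  exists X (i : Hom X Y), E i d.

Definition is_pushout {X Y X' Y' : Obj} (f : Hom X X') (i : Hom X Y)
  (i' : Hom X' Y') (f' : Hom Y Y') : Prop :=
  comp f' i = comp i' f /\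
  forall T (u : Hom Y T) (v : Hom X' T), comp u i = comp v f ->
    exists! w : Hom Y' T, comp w f' = u /\ comp w i' = v.

Definition is_pullback {Y Z Z' Y' : Obj} (d : Hom Y Z) (g : Hom Z' Z)
  (d' : Hom Y' Z') (g' : Hom Y' Y) : Prop :=
  comp d g' = comp g d' /\
  forall T (u : Hom T Y) (v : Hom T Z'), comp d u = comp g v ->
    exists! w : Hom T Y', comp g' w = u /\ comp d' w = v.

(** Quillen exact structure (Buehler, Def. 2.1) *)
Definition exact_structure : Prop :=
  [/\
      (forall X Y Z (i : Hom X Y) (d : Hom Y Z), E i d ->
         is_kernel i d /\ is_cokernel i d),
      (forall X Y Z X' Y' Z' (i : Hom X Y) (d : Hom Y Z) (i' : Hom X' Y')
         (d' : Hom Y' Z') (a : Hom X X') (b : Hom Y Y') (c : Hom Z Z'),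
         E i d -> iso a -> iso b -> iso c ->
         comp b i = comp i' a -> comp c d = comp d' b -> E i' d'),
      (forall X, adm_monic (idm X)) /\ (forall X, adm_epic (idm X)),
      (forall X Y Z (f : Hom X Y) (g : Hom Y Z),
         adm_monic f -> adm_monic g -> adm_monic (comp g f)) /\
      (forall X Y Z (f : Hom X Y) (g : Hom Y Z),
         adm_epic f -> adm_epic g -> adm_epic (comp g f))
    &
      (forall X Y X' (i : Hom X Y) (f : Hom X X'), adm_monic i ->
         exists Y' (i' : Hom X' Y') (f' : Hom Y Y'),
           is_pushout f i i' f' /\ adm_monic i') /\
      (forall Y Z Z' (d : Hom Y Z) (g : Hom Z' Z), adm_epic d ->
         exists Y' (d' : Hom Y' Z') (g' : Hom Y' Y),
           is_pullback d g d' g' /\ adm_epic d')].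

Definition proper_sub (X Y : Obj) : Prop :=
  exists i : Hom X Y, adm_monic i /\ ~ iso i.

Definition E_simple (S : Obj) : Prop :=
  ~ is_zero S /\
  forall A (i : Hom A S), adm_monic i -> is_zero A \/ isomorphic A S.

Definition has_chain (X : Obj) (n : nat) : Prop :=
  exists (Xs : nat -> Obj) (f : forall k, Hom (Xs k) (Xs k.+1)),
    [/\ is_zero (Xs 0%N), Xs n = X &
        forall k, (k < n)%N -> adm_monic (f k) /\ ~ iso (f k)].

Definition is_sup_nat (P : nat -> Prop) (l : nat) : Prop :=
  (forall n, P n -> (n <= l)%N) /\
  (forall m, (forall n, P n -> (n <= m)%N) -> (l <= m)%N).

(** l_E(X) (meaningful when it is finite) *)
Definition lE (X : Obj) : nat :=
  epsilon (inhabits 0%N) (is_sup_nat (has_chain X)).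

Definition finite_exact : Prop :=
  forall X : Obj, exists N, forall n, has_chain X n -> (n <= N)%N.

Definition indec (X : Obj) : Prop :=
  ~ is_zero X /\
  forall A B (i1 : Hom A X) (i2 : Hom B X) (p1 : Hom X A) (p2 : Hom X B),
    biprod i1 i2 p1 p2 -> is_zero A \/ is_zero B.

Fixpoint chainR (R : Obj -> Obj -> Prop) (x : Obj) (xs : seq Obj) : Prop :=
  match xs with
  | [::] => True
  | y :: ys => R x y /\ chainR R y ys
  end.

End ExactCategories.

Fixpoint lll (x y : seq nat) : bool :=
  match x, y with
  | [::], _ => true
  | _ :: _, [::] => false
  | a :: x', b :: y' => if a == b then lll x' y' else (b < a)%N
  end.

Section Mu.
Variable C : preadd.
Variable E : exclass C.

Definition mu_cand (X : Obj C) (t : seq nat) : Prop :=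
  exists (x0 : Obj C) (xs : seq (Obj C)),
    [/\ last x0 xs = X,
        (forall y, List.In y (x0 :: xs) -> indec y),
        chainR (proper_sub E) x0 xs
      & t = map (lE E) (x0 :: xs)].

Definition muE (X : Obj C) : seq nat :=
  epsilon (inhabits [::])
    (fun t => mu_cand X t /\ forall t', mu_cand X t' -> lll t' t).

End Mu.

(* Main.v *)
Require Import Defs.
From HB Require Import structures.
From mathcomp Require Import all_boot all_algebra.
From Stdlib Require Import ClassicalEpsilon Classical.
Set Implicit Arguments. Unset Strict Implicit. Unset Printing Implicit Defensive.


Notation PS := Defs.proper_sub.
Local Notation Hom := Defs.Hom.
Local Notation comp := Defs.comp.
Local Notation compA := Defs.compA.
Local Notation comp1m := Defs.comp1m.
Local Notation compm1 := Defs.compm1.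
Local Notation compDl := Defs.compDl.
Local Notation compDr := Defs.compDr.
Local Notation iso := Defs.iso.

Lemma comp0m (C : preadd) (X Y Z : Obj C) (f : Hom X Y) :
  comp (0%R : Hom Y Z) f = 0%R.
Proof.
have := compDl (0%R : Hom Y Z) 0%R f; rewrite GRing.addr0 => h.
by apply: (GRing.addrI (comp (0%R : Hom Y Z) f)); rewrite GRing.addr0 -h.
Qed.

Lemma compm0 (C : preadd) (X Y Z : Obj C) (g : Hom Y Z) :
  comp g (0%R : Hom X Y) = 0%R.
Proof.
have := compDr g (0%R : Hom X Y) 0%R; rewrite GRing.addr0 => h.
by apply: (GRing.addrI (comp g (0%R : Hom X Y))); rewrite GRing.addr0 -h.
Qed.

Lemma zero_from (C : preadd) (Z B : Obj C) (f : Hom Z B) : is_zero Z -> f = 0%R.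
Proof. by move=> hz; rewrite -(compm1 f) hz compm0. Qed.

Lemma zero_to (C : preadd) (Z B : Obj C) (f : Hom B Z) : is_zero Z -> f = 0%R.
Proof. by move=> hz; rewrite -(comp1m f) hz comp0m. Qed.

Lemma iso_zero (C : preadd) (A B : Obj C) : isomorphic A B -> is_zero A -> is_zero B.
Proof.
move=> [f [g [h1 h2]]] hz; rewrite /is_zero -h2 (zero_from f hz) comp0m //.
Qed.

Lemma isomorphic_sym (C : preadd) (A B : Obj C) : isomorphic A B -> isomorphic B A.
Proof. by move=> [f [g [h1 h2]]]; exists g; exists f. Qed.

Lemma iso_adm (C : preadd) (E : exclass C) (HE : exact_structure E)
  (A B : Obj C) (f : Hom A B) : iso f -> adm_monic E f.
Proof.
case: HE => _ Hcl [HE0 _] _ _ [g [h1 h2]].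
have [Z [d Hd]] := HE0 A.
exists Z, (comp d g).
apply: (Hcl _ _ _ _ _ _ _ d _ _ (idm A) f (idm Z) Hd).
- by exists (idm A); rewrite comp1m.
- by exists g.
- by exists (idm Z); rewrite comp1m.
- by [].
- by rewrite comp1m -compA h1 compm1.
Qed.

Lemma adm_comp (C : preadd) (E : exclass C) (HE : exact_structure E)
  (X Y Z : Obj C) (f : Hom X Y) (g : Hom Y Z) :
  adm_monic E f -> adm_monic E g -> adm_monic E (comp g f).
Proof. by case: HE => _ _ _ [H _] _; apply: H. Qed.

Lemma zero_sub (C : preadd) (E : exclass C) (HE : exact_structure E) (X : Obj C) :
  exists K (i : Hom K X), is_zero K /\ adm_monic E i.
Proof.
case: HE => Hker _ [_ HE0] _ _.
have [K [i Hi]] := HE0 X.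
exists K, i; split; last by exists X, (idm X).
have [[Hc Hu] _] := Hker _ _ _ _ _ Hi.
rewrite comp1m in Hc.
have [g0 [_ Hg0]] := Hu K 0%R ltac:(by rewrite compm0).
have e1 := Hg0 (idm K) ltac:(by rewrite compm1).
have e2 := Hg0 0%R ltac:(by rewrite compm0).
by rewrite /is_zero -e1 -e2.
Qed.

Lemma adm_into_zero (C : preadd) (E : exclass C) (HE : exact_structure E)
  (W Z : Obj C) (i : Hom W Z) : adm_monic E i -> is_zero Z -> is_zero W.
Proof.
case: HE => Hker _ _ _ _ [Z' [d Hd]] hz.
have [[Hc Hu] _] := Hker _ _ _ _ _ Hd.
have [g0 [_ Hg0]] := Hu W 0%R ltac:(by rewrite compm0).
have e1 := Hg0 (idm W) ltac:(by rewrite compm1 (zero_to i hz)).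
have e2 := Hg0 0%R ltac:(by rewrite compm0).
by rewrite /is_zero -e1 -e2.
Qed.

Lemma no_PS_zero (C : preadd) (E : exclass C) (HE : exact_structure E)
  (W Z : Obj C) : PS E W Z -> ~ is_zero Z.
Proof.
move=> [i [Hi Hni]] hz; apply: Hni.
have hw := adm_into_zero HE Hi hz.
exists 0%R; split; first by rewrite comp0m hw.
by rewrite compm0 hz.
Qed.

Lemma PS_iso_r (C : preadd) (E : exclass C) (HE : exact_structure E)
  (Z A B : Obj C) : PS E Z A -> isomorphic A B -> PS E Z B.
Proof.
move=> [i [Hi Hni]] [f [g [h1 h2]]].
exists (comp f i); split.
  by apply: adm_comp => //; apply: iso_adm => //; exists g.
move=> [h [k1 k2]]; apply: Hni; exists (comp h f); split; first by rewrite -compA.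
have -> : comp i (comp h f) = comp g (comp (comp (comp f i) h) f)
  by rewrite !compA h1 comp1m.
by rewrite k2 comp1m.
Qed.

Definition chainrel (C : preadd) (E : exclass C) (X : Obj C) (n : nat) : Prop :=
  exists Xs : nat -> Obj C,
    [/\ is_zero (Xs 0%N), Xs n = X & forall k, (k < n)%N -> PS E (Xs k) (Xs k.+1)].

Lemma has_chainP (C : preadd) (E : exclass C) (X : Obj C) n :
  has_chain E X n <-> chainrel E X n.
Proof.
split.
  move=> [Xs [f [h0 hn hk]]]; exists Xs; split => // k /hk [h1 h2].
  by exists (f k).
move=> [Xs [h0 hn hk]].
pose f k := epsilon (inhabits (0%R : Hom (Xs k) (Xs k.+1)))
   (fun g => adm_monic E g /\ ~ iso g).
exists Xs, f; split => // k /hk [g hg].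
by apply: (epsilon_spec (inhabits (0%R : Hom (Xs k) (Xs k.+1)))
   (fun g => adm_monic E g /\ ~ iso g)); exists g.
Qed.

Lemma chain_ext (C : preadd) (E : exclass C) (A B : Obj C) m :
  chainrel E A m -> PS E A B -> chainrel E B m.+1.
Proof.
move=> [Xs [h0 hn hk]] hAB.
exists (fun k => if (k <= m)%N then Xs k else B); split => //=.
  by rewrite ltnn.
move=> k hkm; rewrite ltnS in hkm; rewrite hkm.
case: (ltngtP k m) hkm => // [hlt|->] _.
  exact: hk.
by rewrite hn.
Qed.

Lemma chain_iso (C : preadd) (E : exclass C) (HE : exact_structure E)
  (A B : Obj C) n : chainrel E A n -> isomorphic A B -> chainrel E B n.
Proof.
move=> [Xs [h0 hn hk]] hAB.
case: n hn hk => [|m] hn hk.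
  exists (fun _ => B); split => //; apply: (iso_zero hAB); by rewrite -hn.
exists (fun k => if k == m.+1 then B else Xs k); split => //=.
  by rewrite eqxx.
move=> k hkm; have -> : (k == m.+1) = false by apply/negbTE; rewrite neq_ltn hkm.
case: (eqVneq k m) => [->|hne]; first by rewrite eqxx; apply: PS_iso_r (hk m _) _ => //; rewrite hn.
by rewrite eqSS (negbTE hne); apply: hk.
Qed.

Lemma chain_zero (C : preadd) (E : exclass C) (HE : exact_structure E)
  (Z : Obj C) n : chainrel E Z n.+1 -> ~ is_zero Z.
Proof.
move=> [Xs [h0 hn hk]]; have := hk n (ltnSn n); rewrite hn.
exact: no_PS_zero.
Qed.

Lemma chain_exists (C : preadd) (E : exclass C) (HE : exact_structure E)
  (X : Obj C) : (is_zero X -> chainrel E X 0) /\ (~ is_zero X -> chainrel E X 1).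
Proof.
split.
  by move=> hz; exists (fun _ => X).
move=> hnz.
have [K [i [hK hi]]] := zero_sub HE X.
exists (fun k => if k is 0 then K else X); split => // k; rewrite ltnS leqn0 => /eqP -> /=.
exists i; split => // [[g [_ h2]]]; apply: hnz.
by rewrite /is_zero -h2 (zero_from i hK) comp0m.
Qed.

Lemma max_nat (P : nat -> Prop) N :
  (exists n, P n) -> (forall n, P n -> (n <= N)%N) ->
  exists l, P l /\ forall n, P n -> (n <= l)%N.
Proof.
elim: N => [|N IH] [n0 hn0] hb.
  exists 0%N; split; last by move=> n /hb.
  by have := hb _ hn0; rewrite leqn0 => /eqP <-.
case: (classic (P N.+1)) => hP; first by exists N.+1.
apply: IH; first by exists n0.
move=> n hn; have := hb _ hn; rewrite leq_eqVlt ltnS => /orP [/eqP e|//].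
by rewrite e in hn.
Qed.

Lemma lE_spec (C : preadd) (E : exclass C) (HE : exact_structure E)
  (Hfin : finite_exact E) (X : Obj C) :
  chainrel E X (lE E X) /\ forall n, chainrel E X n -> (n <= lE E X)%N.
Proof.
have [N hN] := Hfin X.
have ne : exists n, has_chain E X n.
  case: (classic (is_zero X)) => h; [exists 0%N | exists 1%N];
   apply/has_chainP; by apply (chain_exists HE X).
have [l [hl hmax]] := max_nat ne hN.
have hsup : is_sup_nat (has_chain E X) l.
  by split => // m hm; apply: hm.
have hs := epsilon_spec (inhabits 0%N) (is_sup_nat (has_chain E X)) (ex_intro _ l hsup).
rewrite -/(lE E X) in hs.
have el : lE E X = l.
  case: hs => [h1 h2]; apply/eqP; rewrite eqn_leq; apply/andP; split.
    by apply: h2.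
  by apply: h1.
rewrite el; split; first by apply/has_chainP.
by move=> n /has_chainP /hmax.
Qed.

Section Lemmas2.
End Lemmas2.

Lemma PS_lt (C : preadd) (E : exclass C) (HE : exact_structure E)
  (Hfin : finite_exact E) (A B : Obj C) : PS E A B -> (lE E A < lE E B)%N.
Proof.
move=> h; have [hA _] := lE_spec HE Hfin A; have [_ hB] := lE_spec HE Hfin B.
exact: hB _ (chain_ext hA h).
Qed.

Lemma lE_iso (C : preadd) (E : exclass C) (HE : exact_structure E)
  (Hfin : finite_exact E) (A B : Obj C) : isomorphic A B -> lE E A = lE E B.
Proof.
move=> h; have [hA hA'] := lE_spec HE Hfin A; have [hB hB'] := lE_spec HE Hfin B.
apply/eqP; rewrite eqn_leq; apply/andP; split.
  exact: hB' _ (chain_iso HE hA h).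
exact: hA' _ (chain_iso HE hB (isomorphic_sym h)).
Qed.

Lemma lE_pos (C : preadd) (E : exclass C) (HE : exact_structure E)
  (Hfin : finite_exact E) (A : Obj C) : ~ is_zero A -> (0 < lE E A)%N.
Proof.
move=> h; have [_ hA] := lE_spec HE Hfin A.
exact: hA _ ((chain_exists HE A).2 h).
Qed.

Lemma PS_trans (C : preadd) (E : exclass C) (HE : exact_structure E)
  (Hfin : finite_exact E) (B A Y : Obj C) : PS E B A -> PS E A Y -> PS E B Y.
Proof.
move=> hBA hAY; have l1 := PS_lt HE Hfin hBA; have l2 := PS_lt HE Hfin hAY.
case: hBA => [b [hb _]]; case: hAY => [i [hi _]].
exists (comp i b); split; first exact: adm_comp.
move=> hiso; have := lE_iso HE Hfin (ex_intro _ _ hiso) => e.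
by move: (ltn_trans l1 l2); rewrite e ltnn.
Qed.

Lemma biprod_sym (C : preadd) (W A B : Obj C) (i1 : Hom A W) (i2 : Hom B W)
  (p1 : Hom W A) (p2 : Hom W B) : biprod i1 i2 p1 p2 -> biprod i2 i1 p2 p1.
Proof. by case=> h1 h2 h3 h4 h5; split => //; rewrite GRing.addrC. Qed.

Lemma split_adm (C : preadd) (E : exclass C) (HE : exact_structure E)
  (W A B : Obj C) (i1 : Hom A W) (i2 : Hom B W)
  (p1 : Hom W A) (p2 : Hom W B) : biprod i1 i2 p1 p2 -> adm_monic E i2.
Proof.
case=> h1 h2 h3 h4 h5.
have [K [k [hK hk]]] := zero_sub HE A.
have HE' := HE; case: HE' => _ _ _ _ [HE2 _].
have [Y' [i' [f' [[hsq hpo] hi']]]] := HE2 _ _ _ k (0%R : Hom K B) hk.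
have [w [[hw1 hw2] _]] := hpo W i1 i2 (etrans (zero_from _ hK) (esym (zero_from _ hK))).
pose w' := (comp f' p1 + comp i' p2)%R.
have [w0 [_ hu]] := hpo Y' f' i' hsq.
have e1 : comp w' w = idm Y'.
  rewrite -(hu (idm Y')); last by rewrite !comp1m.
  symmetry; apply: hu; rewrite -!compA hw1 hw2 /w' !compDl -!compA h1 h2 h3 h4 !compm1 !compm0.
  by rewrite GRing.addr0 GRing.add0r.
have e2 : comp w w' = idm W.
  by rewrite /w' compDr !compA hw1 hw2.
rewrite -hw2; apply: adm_comp => //; apply: iso_adm => //.
by exists w'.
Qed.

Lemma summand_PS (C : preadd) (E : exclass C) (HE : exact_structure E)
  (W A B : Obj C) (i1 : Hom A W) (i2 : Hom B W)
  (p1 : Hom W A) (p2 : Hom W B) : biprod i1 i2 p1 p2 -> ~ is_zero B -> PS E A W.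
Proof.
move=> hb hB; exists i1; split; first exact: split_adm (biprod_sym hb).
case: hb => h1 h2 h3 h4 h5 [g [g1 g2]]; apply: hB.
have e : p2 = 0%R by rewrite -(compm1 p2) -g2 compA h4 comp0m.
by rewrite /is_zero -h2 e comp0m.
Qed.

Lemma indec_sub (C : preadd) (E : exclass C) (HE : exact_structure E)
  (Hfin : finite_exact E) (A : Obj C) :
  ~ is_zero A -> exists B, indec B /\ (B = A \/ PS E B A).
Proof.
move: {2}(lE E A) (leqnn (lE E A)) => n; elim: n A => [|n IH] A hn hA.
  by have := lE_pos HE Hfin hA; rewrite leqn0 in hn; rewrite (eqP hn).
case: (classic (indec A)) => hi; first by exists A; split => //; left.
have : exists A' B' (i1 : Hom A' A) (i2 : Hom B' A) (p1 : Hom A A') (p2 : Hom A B'),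
    biprod i1 i2 p1 p2 /\ ~ is_zero A' /\ ~ is_zero B'.
  apply: NNPP => hn'; apply: hi; split => // A' B' i1 i2 p1 p2 hb.
  apply: NNPP => hz; apply: hn'; exists A', B', i1, i2, p1, p2; split => //.
  by split => h; apply: hz; [left|right].
move=> [A' [B' [i1 [i2 [p1 [p2 [hb [hA' hB']]]]]]]].
have hPS := summand_PS HE hb hB'.
have hl := PS_lt HE Hfin hPS.
have [B [hB hor]] := IH A' (leq_trans hl hn : (lE E A' <= n)%N) hA'.
exists B; split => //; right.
case: hor => [->|h]; [exact: hPS | exact (PS_trans HE Hfin h hPS)].
Qed.

Lemma not_simple (C : preadd) (E : exclass C) (HE : exact_structure E)
  (Hfin : finite_exact E) (Y : Obj C) :
  indec Y -> ~ E_simple E Y -> exists B, indec B /\ PS E B Y.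
Proof.
move=> hY hns.
have : exists A (i : Hom A Y), adm_monic E i /\ ~ is_zero A /\ ~ isomorphic A Y.
  apply: NNPP => hn; apply: hns; split; first by case: hY.
  move=> A i hi; apply: NNPP => hz; apply: hn; exists A, i; split => //.
  by split => h; apply: hz; [left|right].
move=> [A [i [hi [hA hAY]]]].
have hPS : PS E A Y by exists i; split => // h; apply: hAY; exists i.
have [B [hB hor]] := indec_sub HE Hfin hA.
exists B; split => //; case: hor => [->|h]; [exact: hPS | exact (PS_trans HE Hfin h hPS)].
Qed.

Lemma simple_PS_zero (C : preadd) (E : exclass C) (HE : exact_structure E)
  (Hfin : finite_exact E) (X A : Obj C) : E_simple E X -> PS E A X -> is_zero A.
Proof.
move=> [_ hs] h; have hl := PS_lt HE Hfin h.
case: h => [i [hi _]]; case: (hs _ i hi) => // /(lE_iso HE Hfin) e.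
by rewrite e ltnn in hl.
Qed.

Lemma simple_lE (C : preadd) (E : exclass C) (HE : exact_structure E)
  (Hfin : finite_exact E) (X : Obj C) : E_simple E X -> lE E X = 1%N.
Proof.
move=> hs; have hpos := lE_pos HE Hfin (proj1 hs).
have [[Xs [h0 hn hk]] _] := lE_spec HE Hfin X.
move: hpos hn hk; case: (lE E X) => [//|[//|m]] _ hn hk.
have h1 := hk m.+1 (ltnSn _); rewrite hn in h1.
have hz := simple_PS_zero HE Hfin hs h1.
have := hk m (ltnW (ltnSn _)) => h2.
by have := no_PS_zero HE h2 hz.
Qed.

Lemma lll_refl x : lll x x.
Proof. by elim: x => //= a x IH; rewrite eqxx. Qed.

Lemma lll_total x y : lll x y || lll y x.
Proof.
elim: x y => [|a x IH] [|b y] //=.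
case: (a =P b) => [<-|hne]; first by rewrite eqxx IH.
case: (b =P a) => [e|_]; first by rewrite e in hne.
by case: (ltngtP a b) hne => // _; rewrite ?orbT.
Qed.

Lemma lll_trans x y z : lll x y -> lll y z -> lll x z.
Proof.
elim: x y z => [|a x IH] [|b y] [|c z] //=.
case: (a =P b) => [<-|hab].
  move=> h1; case: (a == c) => // h2; exact: IH h1 h2.
move=> h1; case: (b =P c) => [<-|_] h2.
  case: (a =P b) => [e|_]; [by rewrite e ltnn in h1 | exact h1].
case: (a =P c) => [e|_]; last exact: ltn_trans h2 h1.
by rewrite e in h1; have := ltn_trans h2 h1; rewrite ltnn.
Qed.

Lemma max_in (L : seq (seq nat)) : forall (P : seq nat -> Prop),
  (forall t, P t -> t \in L) -> (exists t, P t) ->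
  exists t, P t /\ forall t', P t' -> lll t' t.
Proof.
elim: L => [|a L IH] P hL hne.
  by case: hne => t /hL.
case: (classic (P a)) => hPa; last first.
  apply: IH => // t ht; have := hL _ ht; rewrite inE => /orP [/eqP e|//].
  by rewrite e in ht.
case: (classic (exists t, P t /\ t <> a)) => hex.
  have hsub : forall t, (fun t => P t /\ t <> a) t -> t \in L.
    move=> t [ht hta]; have := hL _ ht; rewrite inE => /orP [/eqP e|//].
    by case: hta.
  have [m [[hm hma] hmax]] := IH (fun t => P t /\ t <> a) hsub hex.
  case/orP: (lll_total m a) => hma'.
    exists a; split => // t' ht'; case: (classic (t' = a)) => [->|hn].
      exact: lll_refl.
    exact: lll_trans (hmax t' (conj ht' hn)) hma'.
  exists m; split => // t' ht'; case: (classic (t' = a)) => [->//|hn].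
  exact: hmax.
exists a; split => // t' ht'; case: (classic (t' = a)) => [->|hn].
  exact: lll_refl.
by exfalso; apply: hex; exists t'.
Qed.

Fixpoint allseqs (n k : nat) : seq (seq nat) :=
  if k is k'.+1 then
    [::] :: [seq a :: t | a <- iota 0 n.+1, t <- allseqs n k']
  else [:: [::]].

Lemma mem_allseqs n k t :
  (size t <= k)%N -> all (fun a => a <= n)%N t -> t \in allseqs n k.
Proof.
elim: k t => [|k IH] [|a t] hs hall.
- by rewrite inE.
- by [].
- by rewrite inE.
change (a :: t \in [::] :: [seq a :: t | a <- iota 0 n.+1, t <- allseqs n k]).
rewrite inE; apply/orP; right.
move: hall => /= /andP [ha ht].
apply/(@allpairsP nat (seq nat) (seq nat) (fun a t => a :: t) (iota 0 n.+1) (allseqs n k)); exists (a, t); split; [by rewrite mem_iota ltnS | apply: IH | by []].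
  by []. by [].
Qed.

Lemma chainR_rcons (C : preadd) (R : Obj C -> Obj C -> Prop) x xs y :
  chainR R x xs -> R (last x xs) y -> chainR R x (rcons xs y).
Proof. by elim: xs x => [|z zs IH] x //= [h1 h2] h3; split => //; apply: IH. Qed.

Lemma In_rcons (C : preadd) (x : Obj C) xs y z :
  List.In z (x :: rcons xs y) -> List.In z (x :: xs) \/ z = y.
Proof.
elim: xs x => [|w ws IH] x /=.
  by move=> [->|[->|[]]]; [left; left|right].
move=> [->|h]; first by left; left.
by case: (IH w h) => [h'|->]; [left; right|right].
Qed.

Lemma chain_size (C : preadd) (E : exclass C) (HE : exact_structure E)
  (Hfin : finite_exact E) x xs :
  chainR (PS E) x xs -> (size xs + lE E x <= lE E (last x xs))%N.
Proof.
elim: xs x => [|y ys IH] x //= [h1 h2].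
apply: leq_trans (IH y h2); rewrite addSn -addnS leq_add2l.
exact (PS_lt HE Hfin h1).
Qed.

Lemma chain_all (C : preadd) (E : exclass C) (HE : exact_structure E)
  (Hfin : finite_exact E) x xs :
  chainR (PS E) x xs -> all (fun a => a <= lE E (last x xs))%N (map (lE E) (x :: xs)).
Proof.
elim: xs x => [|y ys IH] x /=; first by rewrite leqnn.
move=> [h1 h2]; have := IH y h2 => /= /andP [hy ->]; rewrite hy andbT.
by rewrite andbT; exact (leq_trans (ltnW (PS_lt HE Hfin h1)) hy).
Qed.

Lemma cand_bound (C : preadd) (E : exclass C) (HE : exact_structure E)
  (Hfin : finite_exact E) (X : Obj C) t :
  mu_cand E X t -> exists a t', [/\ t = a :: t', (0 < a)%N,
     (size t <= lE E X)%N & all (fun b => b <= lE E X)%N t].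
Proof.
move=> [x0 [xs [hl hind hch ->]]].
have hx0 : (0 < lE E x0)%N.
  apply: (lE_pos HE Hfin); exact: (hind x0 (or_introl erefl)).1.
exists (lE E x0), (map (lE E) xs); split => //.
  rewrite /= size_map -hl; apply: leq_trans (chain_size HE Hfin hch).
  by rewrite -addn1 leq_add2l.
by rewrite -hl; apply: chain_all.
Qed.

Lemma mu_spec (C : preadd) (E : exclass C) (HE : exact_structure E)
  (Hfin : finite_exact E) (X : Obj C) : indec X ->
  mu_cand E X (muE E X) /\ forall t, mu_cand E X t -> lll t (muE E X).
Proof.
move=> hX.
have hL : forall t, mu_cand E X t -> t \in allseqs (lE E X) (lE E X).
  move=> t /(cand_bound HE Hfin) [a [t' [_ _ hs hall]]]; exact: mem_allseqs.
have hne : exists t, mu_cand E X t.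
  exists [:: lE E X], X, [::]; split => //= y [<-|[]] //.
have := max_in hL hne.
exact: (epsilon_spec (inhabits [::])
    (fun t => mu_cand E X t /\ forall t', mu_cand E X t' -> lll t' t)).
Qed.

Lemma mu_head (C : preadd) (E : exclass C) (HE : exact_structure E)
  (Hfin : finite_exact E) (X : Obj C) c : indec X ->
  mu_cand E X (1%N :: c) -> exists t, muE E X = 1%N :: t.
Proof.
move=> hX hc; have [hm hmax] := mu_spec HE Hfin hX.
have [a [t [e ha _ _]]] := cand_bound HE Hfin hm.
exists t; rewrite e; have := hmax _ hc; rewrite e /=.
case: (1 =P a)%N => [<-//|hne].
by rewrite ltnNge ha.
Qed.

Lemma mu_one (C : preadd) (E : exclass C) (HE : exact_structure E)
  (Hfin : finite_exact E) (X : Obj C) : indec X -> lE E X = 1%N ->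
  muE E X = [:: 1%N].
Proof.
move=> hX h1; have [hm _] := mu_spec HE Hfin hX.
have [a [t [e ha hs hall]]] := cand_bound HE Hfin hm.
rewrite e h1 in hs hall *; case: t hs hall e => [|//] _ /= /andP [ha1 _] _.
by have -> : a = 1%N by apply/eqP; rewrite eqn_leq ha1 ha.
Qed.

Lemma simple_root (C : preadd) (E : exclass C) (HE : exact_structure E)
  (Hfin : finite_exact E) (Y : Obj C) : indec Y ->
  exists x0 xs, [/\ chainR (PS E) x0 xs, (forall y, List.In y (x0 :: xs) -> indec y),
     last x0 xs = Y & lE E x0 = 1%N].
Proof.
move: {2}(lE E Y) (leqnn (lE E Y)) => n; elim: n Y => [|n IH] Y hn hY.
  by have := lE_pos HE Hfin (proj1 hY); rewrite leqn0 in hn; rewrite (eqP hn).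
case: (classic (E_simple E Y)) => hs.
  exists Y, [::]; split => //; first by move=> y [<-|[]].
  exact (simple_lE HE Hfin hs).
have [B [hB hBY]] := not_simple HE Hfin hY hs.
have hl := PS_lt HE Hfin hBY.
have [x0 [xs [hch hind hlast h1]]] := IH B (leq_trans hl hn : (lE E B <= n)%N) hB.
exists x0, (rcons xs Y); split => //.
- by apply: chainR_rcons => //; rewrite hlast.
- by move=> y /In_rcons [/hind|->].
- by rewrite last_rcons.
Qed.

Theorem proposition7p8 (C : preadd) (E : exclass C)
  (HA : additive C) (HE : exact_structure E) (Hfin : finite_exact E) :
  (* (GR4) *)
  (forall X Y : Obj C, indec X -> indec Y ->
     lll (muE E X) (muE E Y) \/ lll (muE E Y) (muE E X)) /\
  (* (GR5) *)
  (forall n : nat, exists s : seq (seq nat),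
     forall X : Obj C, indec X -> (lE E X <= n)%N -> muE E X \in s) /\
  (* (GR6) *)
  (forall X : Obj C, indec X ->
     (E_simple E X <-> forall Y : Obj C, indec Y -> lll (muE E X) (muE E Y))).
Proof.
split.
  by move=> X Y _ _; case/orP: (lll_total (muE E X) (muE E Y)); [left|right].
split.
  move=> n; exists (allseqs n n) => X hX hn.
  have [hm _] := mu_spec HE Hfin hX.
  have [a [t [e ha hs hall]]] := cand_bound HE Hfin hm.
  apply: mem_allseqs; first exact: leq_trans hs hn.
  apply/allP => b hb; have := allP hall b hb => hb'; exact: leq_trans hb' hn.
move=> X hX; split.
  move=> hs Y hY.
  rewrite (mu_one HE Hfin hX (simple_lE HE Hfin hs)).
  have [x0 [xs [hch hind hlast h1]]] := simple_root HE Hfin hY.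
  have [t ->] : exists t, muE E Y = 1%N :: t.
    apply: (mu_head HE Hfin (c := map (lE E) xs) hY).
    by exists x0, xs; split => //=; rewrite h1.
  by [].
move=> H; apply: NNPP => hns.
have [B [hB hBX]] := not_simple HE Hfin hX hns.
have [x0 [xs [hch hind hlast h1]]] := simple_root HE Hfin hB.
have [t et] : exists t, muE E X = 1%N :: t.
  apply: (mu_head HE Hfin (c := map (lE E) (rcons xs X)) hX).
  exists x0, (rcons xs X); split => //=.
  - by rewrite last_rcons.
  - by move=> y /In_rcons [/hind|->].
  - by apply: chainR_rcons => //; rewrite hlast.
  - by rewrite h1.
have hx0 : indec x0 by apply: hind; left.
have := H x0 hx0; rewrite et (mu_one HE Hfin hx0 h1) /=.
case: t et => [|//] et _.
have [hm _] := mu_spec HE Hfin hX; rewrite et in hm.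
case: hm => [z0 [zs [hl _ _ e]]].
case: zs e hl => [|//] /= [e1] hl; rewrite hl in e1.
have := PS_lt HE Hfin hBX; rewrite -e1.
by rewrite ltnS leqn0 => /eqP h0; have := lE_pos HE Hfin (proj1 hB); rewrite h0.
Qed.
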